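(* Let $E\subseteq D$ be a subspace of the Fischer space $\Pi(D)$, i.e., $d^e\in E$ for all $d,e\in E$. Then the algebra $\mathcal{A}(D)/\mathcal{V}(D)$ contains a subalgebra that has a quotient isomorphic to $\mathcal{A}(E)/\mathcal{V}(E)$.
   Context: Let $G$ be a group generated by a conjugacy class $D$ of involutions such that for all $d,e\in D$ the order of $de$ is $1$, $2$ or $3$. The Fischer space $\Pi(D)$ has point set $D$ and lines the triples $\{d,e,d^e\}$ with $d,e\in D$ non-commuting. $\mathcal{A}(D)$ is the $\mathbb{F}_2$-vector space with basis $D$ (finite subsets under symmetric difference), with bilinear product determined by $d*e=d+e+f$ if $\{d,e,f\}$ is a line and $d*e=0$ otherwise. The bilinear form is determined by $\langle d,e\rangle=1$ if $d,e$ do not commute and $0$ otherwise, and $\mathcal{V}(D)$ is its radical. For the subspace $E$, $\mathcal{A}(E)$ is the subalgebra of $\mathcal{A}(D)$ spanned by $E$ (the same construction applied to $E$ and the lines contained in $E$), and $\mathcal{V}(E)$ is the radical of the restriction of $\langle\cdot,\cdot\rangle$ to $\mathcal{A}(E)$. *)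

(* Defs.v *)
From HB Require Import structures.
From mathcomp Require Import all_boot.
From mathcomp Require Import finmap.

Set Implicit Arguments.
Unset Strict Implicit.
Unset Printing Implicit Defensive.

Local Open Scope fset_scope.

Section Fischer.
Variable G : groupType.
Local Open Scope group_scope.

Definition involution (x : G) : Prop := x != 1 /\ x * x = 1.

Definition is_conj_class (D : pred G) : Prop :=
  exists d0 : G, forall x : G, D x <-> exists g : G, x = d0 ^ g.

(* G is generated by D: every element of G is a finite product of
   elements of D (D is closed under inverses, as it consists of involutions;
   the empty product is 1). *)
Definition generates (D : pred G) : Prop :=
  forall g : G, exists s : seq G, all D s /\ g = foldr (fun a b => a * b) 1 s.

Definition order_le3 (x : G) : Prop :=
  x ^+ 1 = 1 \/ x ^+ 2 = 1 \/ x ^+ 3 = 1.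

Definition fischer_subspace (D E : pred G) : Prop :=
  {subset E <= D} /\ forall d e, E d -> E e -> E (d ^ e).

(* An element of A(S) (for S = D or S = E) is a finite subset x of S,
   viewed as the formal F_2-sum of its elements. *)
Definition supported (S : pred G) (x : {fset G}) : Prop := {subset x <= S}.

Definition addv (x y : {fset G}) : {fset G} := (x `\` y) `|` (y `\` x).

Definition commb (d e : G) : bool := d * e == e * d.

(* product of basis elements: d*e = d + e + d^e if {d,e,d^e} is a line
   (i.e. d, e do not commute), and 0 otherwise *)
Definition mul1 (d e : G) : {fset G} :=
  if commb d e then fset0 else addv (addv [fset d] [fset e]) [fset d ^ e].

Definition mulv (x y : {fset G}) : {fset G} :=
  \big[addv/fset0]_(d <- x) \big[addv/fset0]_(e <- y) mul1 d e.

Definition formv (x y : {fset G}) : bool :=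
  \big[addb/false]_(d <- x) \big[addb/false]_(e <- y) ~~ commb d e.

Definition radical (S : pred G) (x : {fset G}) : Prop :=
  supported S x /\ forall y, supported S y -> formv x y = false.

(* A subalgebra of A(D)/V(D) is given by its preimage B in A(D):
   a subspace of A(D) containing V(D) and closed under the product. *)
Definition subalg_mod_rad (D : pred G) (B : pred {fset G}) : Prop :=
  [/\ forall x, B x -> supported D x,
      forall x, radical D x -> B x,
      forall x y, B x -> B y -> B (addv x y)
    & forall x y, B x -> B y -> B (mulv x y)].

(* phi induces a surjective F_2-algebra homomorphism
   B/V(D) -> A(E)/V(E); by the first isomorphism theorem this is the
   same as B/V(D) having a quotient (by the kernel, an ideal)
   isomorphic to A(E)/V(E). *)
Definition surj_hom_mod_rad (D E : pred G) (B : pred {fset G})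
    (phi : {fset G} -> {fset G}) : Prop :=
  [/\ forall x, B x -> supported E (phi x),
      forall x y, B x -> B y ->
        radical E (addv (phi (addv x y)) (addv (phi x) (phi y))),
      forall x y, B x -> B y ->
        radical E (addv (phi (mulv x y)) (mulv (phi x) (phi y))),
      forall x, radical D x -> radical E (phi x)
    & forall z, supported E z -> exists2 x, B x & radical E (addv (phi x) z)].

Definition subalg_with_quotient_iso (D E : pred G) : Prop :=
  exists B : pred {fset G}, subalg_mod_rad D B /\
    exists phi : {fset G} -> {fset G}, surj_hom_mod_rad D E B phi.

End Fischer.

(* Main.v *)
Require Import Defs.
From HB Require Import structures.
From mathcomp Require Import all_boot.
From mathcomp Require Import finmap.
Set Implicit Arguments.
Unset Strict Implicit.
Unset Printing Implicit Defensive.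
Local Open Scope fset_scope.

Section S.
Variable G : groupType.
Implicit Types x y z a b : {fset G}.

Lemma in_addv x y t : (t \in addv x y) = (t \in x) (+) (t \in y).
Proof. by rewrite !inE; case: (t \in x); case: (t \in y). Qed.

Lemma addvA : associative (@addv G).
Proof. by move=> x y z; apply/fsetP=> t; rewrite !in_addv addbA. Qed.
Lemma addvC : commutative (@addv G).
Proof. by move=> x y; apply/fsetP=> t; rewrite !in_addv addbC. Qed.
Lemma add0v : left_id fset0 (@addv G).
Proof. by move=> x; apply/fsetP=> t; rewrite !in_addv inE. Qed.
Lemma addvv x : addv x x = fset0.
Proof. by apply/fsetP=> t; rewrite !in_addv inE addbb. Qed.
End S.

HB.instance Definition _ (G : groupType) :=
  Monoid.isComLaw.Build {fset G} fset0 (@addv G) (@addvA G) (@addvC G) (@add0v G).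

Section Big.
Variables (R : Type) (idx : R) (op : Monoid.com_law idx) (I : choiceType).
Hypothesis opK : forall a, op a a = idx.

Lemma big_symdiff (x y : {fset I}) (F : I -> R) :
  \big[op/idx]_(i <- (x `\` y) `|` (y `\` x)) F i =
  op (\big[op/idx]_(i <- x) F i) (\big[op/idx]_(i <- y) F i).
Proof.
rewrite (@big_fsetID _ _ op _ (mem y) x) (@big_fsetID _ _ op _ (mem x) y).
rewrite (@big_fsetID _ _ op _ (mem y) ((x `\` y) `|` (y `\` x))).
set A := \big[op/idx]_(i <- [fset z in x | mem y z]) F i.
have -> : \big[op/idx]_(i <- [fset z in y | mem x z]) F i = A.
  by apply: eq_fbigl => t; rewrite !inE andbC.
have key : forall A B C, op (op A B) (op A C) = op B C.
  move=> A0 B C; transitivity (op (op A0 A0) (op B C)); first exact: Monoid.mulmACA.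
  by rewrite opK Monoid.mul1m.
rewrite key.
rewrite Monoid.mulmC; congr (op _ _); apply: eq_fbigl => t; rewrite !inE /=;
  by case: (t \in x); case: (t \in y).
Qed.
End Big.
Section Grp.
Variable G : groupType.
Local Open Scope group_scope.
Implicit Types d e f g x y : G.

Lemma commbJ x y g : commb (x ^ g) (y ^ g) = commb x y.
Proof. by rewrite /commb -!conjMg (inj_eq (@conjg_inj _ g)). Qed.

Lemma commb_sym x y : commb x y = commb y x.
Proof. by rewrite /commb eq_sym. Qed.

Lemma commb_conj e f : commb e f -> f ^ e = f.
Proof. by move=> /eqP H; rewrite conjgE -H mulKg. Qed.

Lemma invol_inv d : involution d -> d^-1 = d.
Proof. by case=> _ H; apply: mulg1_eq. Qed.

Lemma ord3 e f : involution e -> involution f -> order_le3 (e * f) ->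
  ~~ commb e f -> e ^ f = f ^ e.
Proof.
move=> ie if_ ho nc; have ei := invol_inv ie; have fi := invol_inv if_.
case: ie => _ ee; case: if_ => _ ff.
case: ho => [H|[H|H]].
- rewrite expg1 in H; move: nc; rewrite /commb.
  have : e^-1 = f by apply: mulg1_eq.
  by rewrite ei => ->; rewrite eqxx.
- rewrite expgS expg1 in H; move: nc; rewrite /commb.
  have := mulg1_eq H; rewrite invgM ei fi => ->; by rewrite eqxx.
- have H' : (e * (f * e)) * (f * (e * f)) = 1.
    by rewrite -H !expgS expg0 mulg1 !mulgA.
  have := mulg1_eq H'; rewrite !invgM ei fi !conjgE ei fi => <-.
  by rewrite mulgA.
Qed.
End Grp.
Section Alg.
Variable G : groupType.
Implicit Types x y z a b w v : {fset G}.

Lemma formv_addl x y z : formv (addv x y) z = formv x z (+) formv y z.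
Proof. by rewrite /formv /addv big_symdiff //; exact: addbb. Qed.

Lemma formv_sym x y : formv x y = formv y x.
Proof. rewrite /formv exchange_big; apply: eq_bigr => d _; apply: eq_bigr => e _.
by rewrite commb_sym. Qed.

Lemma formv_addr x y z : formv z (addv x y) = formv z x (+) formv z y.
Proof. by rewrite !(formv_sym z) formv_addl. Qed.

Lemma formv0l z : formv fset0 z = false.
Proof. by rewrite /formv big_seq_fset0. Qed.

Lemma formv11 (d e : G) : formv [fset d] [fset e] = ~~ commb d e.
Proof. by rewrite /formv !big_seq_fset1. Qed.

Lemma formv_suml (r : seq G) (F : G -> {fset G}) z :
  formv (\big[@addv G/fset0]_(i <- r) F i) z = \big[addb/false]_(i <- r) formv (F i) z.
Proof.
by apply: (big_morph (fun u => formv u z)) => [u w|]; rewrite ?formv_addl ?formv0l.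
Qed.

Lemma formv_sumr (r : seq G) (F : G -> {fset G}) z :
  formv z (\big[@addv G/fset0]_(i <- r) F i) = \big[addb/false]_(i <- r) formv z (F i).
Proof.
rewrite formv_sym formv_suml; apply: eq_bigr => i _; exact: formv_sym.
Qed.

Lemma formv_decl x w : formv x w = \big[addb/false]_(d <- x) formv [fset d] w.
Proof. by rewrite /formv; apply: eq_bigr => d _; rewrite big_seq_fset1. Qed.

Lemma formv_decr x w : formv w x = \big[addb/false]_(d <- x) formv w [fset d].
Proof. by rewrite formv_sym formv_decl; apply: eq_bigr => d _; rewrite formv_sym. Qed.

Lemma mulv_addl x y z : mulv (addv x y) z = addv (mulv x z) (mulv y z).
Proof. by rewrite /mulv [addv x y]/addv big_symdiff //; exact: addvv. Qed.

Lemma mulv_addr x y z : mulv z (addv x y) = addv (mulv z x) (mulv z y).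
Proof.
rewrite /mulv -big_split /=; apply: eq_bigr => d _.
by rewrite [addv x y]/addv big_symdiff //; exact: addvv.
Qed.

Lemma supported_addv (S : pred G) x y :
  supported S x -> supported S y -> supported S (addv x y).
Proof.
move=> hx hy t; rewrite in_addv.
by case tx: (t \in x); case ty: (t \in y) => //= _; [apply: hx | apply: hy].
Qed.

Lemma supported0 (S : pred G) : supported S fset0.
Proof. by move=> t; rewrite inE. Qed.

Lemma supported1 (S : pred G) (d : G) : S d -> supported S [fset d].
Proof. by move=> hd t; rewrite inE => /eqP ->. Qed.

Lemma supported_mulv (S : pred G) x y :
  (forall d e, S d -> S e -> S (d ^ e)%g) ->
  supported S x -> supported S y -> supported S (mulv x y).
Proof.
move=> hS hx hy; rewrite /mulv big_seq.
apply: (big_ind (supported S)) => [|u w|d hd]; [exact: supported0|exact: supported_addv|].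
rewrite big_seq; apply: (big_ind (supported S)) => [|u w|e he]; [exact: supported0|exact: supported_addv|].
rewrite /mul1; case: commb; first exact: supported0.
have Sd := hx _ hd; have Se := hy _ he.
apply: supported_addv; first apply: supported_addv.
all: by apply: supported1 => //; apply: hS.
Qed.

Lemma radical_addv (S : pred G) x y :
  radical S x -> radical S y -> radical S (addv x y).
Proof.
case=> sx hx [sy hy]; split; first exact: supported_addv.
by move=> z sz; rewrite formv_addl hx ?hy.
Qed.

Lemma radical0 (S : pred G) : radical S fset0.
Proof. by split; [exact: supported0|move=> z _; exact: formv0l]. Qed.
End Alg.
Section Fisch.
Variable G : groupType.
Variable D : pred G.
Hypothesis hinv : forall d, D d -> involution d.
Hypothesis hord : forall d e, D d -> D e -> order_le3 (d * e)%g.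
Hypothesis hDJ : forall d e, D d -> D e -> D (d ^ e)%g.
Implicit Types x y z a b w v : {fset G}.

Lemma basis_assoc (d e f : G) : D d -> D e -> D f ->
  formv (mul1 d e) [fset f] = formv [fset d] (mul1 e f).
Proof.
move=> Dd De Df; rewrite /mul1.
have ei := invol_inv (hinv De).
case cde: (commb d e); case cef: (commb e f);
  rewrite ?formv0l ?(formv_sym [fset d] fset0) ?formv0l //
          ?formv_addl ?formv_addr ?formv11 ?cde ?cef //=.
- have /= := ord3 (hinv De) (hinv Df) (hord De Df); rewrite cef => /(_ isT) ->.
  have hd : (d ^ e)%g = d by apply: commb_conj; rewrite commb_sym.
  by rewrite -[X in commb X (f ^ e)%g]hd commbJ; case: commb.
- have hf : (f ^ e)%g = f by apply: commb_conj.
  by rewrite -[X in commb (d ^ e) X]hf commbJ; case: commb.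
- have /= := ord3 (hinv De) (hinv Df) (hord De Df); rewrite cef => /(_ isT) ->.
  have hf : ((f ^ e) ^ e)%g = f.
    rewrite -conjgM (_ : (e * e)%g = 1%g) ?conjg1 //; by case: (hinv De).
  by rewrite -[X in commb (d ^ e) X]hf commbJ; case: commb; case: commb.
Qed.

Lemma formv_assoc x y z : supported D x -> supported D y -> supported D z ->
  formv (mulv x y) z = formv x (mulv y z).
Proof.
move=> sx sy sz; rewrite /mulv formv_suml formv_decl; apply: eq_big_seq => d hd.
rewrite formv_suml formv_sumr; apply: eq_big_seq => e he.
rewrite formv_decr formv_sumr; apply: eq_big_seq => f hf.
exact: basis_assoc (sx _ hd) (sy _ he) (sz _ hf).
Qed.

Lemma rad_mull v y : radical D v -> supported D y -> radical D (mulv v y).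
Proof.
case=> sv hv sy; split; first exact: supported_mulv.
move=> z sz; rewrite formv_assoc //; apply: hv; exact: supported_mulv.
Qed.

Lemma rad_mulr a w : radical D w -> supported D a -> radical D (mulv a w).
Proof.
case=> sw hw sa; split; first exact: supported_mulv.
move=> z sz; rewrite formv_sym -formv_assoc // formv_sym; apply: hw.
exact: supported_mulv.
Qed.

Lemma rad_mul2 x y a b : supported D x -> supported D y -> supported D a ->
  supported D b -> radical D (addv x a) -> radical D (addv y b) ->
  radical D (addv (mulv x y) (mulv a b)).
Proof.
move=> sx sy sa sb rxa ryb.
have -> : addv (mulv x y) (mulv a b) = addv (mulv (addv x a) y) (mulv a (addv y b)).
  rewrite mulv_addl mulv_addr -addvA [addv (mulv a y) _]addvA addvv add0v //.
apply: radical_addv; [apply: rad_mull | apply: rad_mulr] => //.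
Qed.
End Fisch.

Section AC.
Variable G : groupType.
Implicit Types x y z a b p q r m : {fset G}.
Lemma ac1 x y a b : addv (addv x y) (addv a b) = addv (addv x a) (addv y b).
Proof. apply/fsetP=> t; rewrite !in_addv.
by case: (t \in x); case: (t \in y); case: (t \in a); case: (t \in b). Qed.
Lemma ac2 m p q : addv p q = addv (addv m p) (addv m q).
Proof. apply/fsetP=> t; rewrite !in_addv.
by case: (t \in m); case: (t \in p); case: (t \in q). Qed.
Lemma ac3 x p : p = addv x (addv x p).
Proof. by rewrite addvA addvv add0v. Qed.
End AC.

From Stdlib Require Import ClassicalEpsilon.

Unset Implicit Arguments.
Theorem lemma2p8 (G : groupType) (D E : pred G)
  (hinv : forall d, D d -> involution d)
  (hcc : is_conj_class D)
  (hgen : generates D)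
  (hord : forall d e, D d -> D e -> order_le3 (d * e)%g)
  (hE : fischer_subspace D E) :
  subalg_with_quotient_iso D E.
Proof.
have hDJ : forall d e, D d -> D e -> D (d ^ e)%g.
  case: hcc => d0 h d e /h [g ->] _; apply/h; exists (g * e)%g; by rewrite conjgM.
case: hE => hED hEJ.
have sED : forall a, supported E a -> supported D a.
  by move=> a sa t /sa; apply: hED.
have radE : forall r, radical D r -> supported E r -> radical E r.
  move=> r [_ hr] sr; split => // y sy; apply: hr; exact: sED.
pose P x a := supported E a /\ radical D (addv x a).
pose B x := supported D x /\ exists a, P x a.
pose phi x := epsilon (inhabits fset0) (P x).
have phiP : forall x, B x -> P x (phi x).
  by move=> x [_ h]; apply: epsilon_spec.
have hB0 : forall x, radical D x -> B x.
  move=> x rx; split; first by case: rx.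
  exists fset0; split; [exact: supported0| by rewrite addvC add0v].
have hBadd : forall x y, B x -> B y -> B (addv x y).
  move=> x y [sx [a [sa ra]]] [sy [b [sb rb]]]; split; first exact: supported_addv.
  exists (addv a b); split; first exact: supported_addv.
  rewrite ac1; exact: radical_addv.
have hBmul : forall x y, B x -> B y -> B (mulv x y).
  move=> x y [sx [a [sa ra]]] [sy [b [sb rb]]]; split; first exact: supported_mulv.
  exists (mulv a b); split; first exact: supported_mulv.
  by apply: rad_mul2 => //; apply: sED.
pose Bb : pred {fset G} := fun x => if excluded_middle_informative (B x) then true else false.
have BbP : forall x, Bb x <-> B x.
  by move=> x; rewrite /Bb; case: excluded_middle_informative.
exists Bb; split.
  split.
  - by move=> x /BbP [].
  - by move=> x /hB0 /BbP.
  - by move=> x y /BbP Bx /BbP By; apply/BbP; apply: hBadd.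
  - by move=> x y /BbP Bx /BbP By; apply/BbP; apply: hBmul.
exists phi; split.
- by move=> x /BbP /phiP [].
- move=> x y /BbP Bx /BbP By; have [pxy rxy] := phiP _ (hBadd _ _ Bx By).
  have [px rx] := phiP _ Bx; have [py ry] := phiP _ By.
  apply: radE; last by apply: supported_addv => //; apply: supported_addv.
  rewrite (ac2 (addv x y)) (ac1 x y (phi x) (phi y)).
  by apply: radical_addv => //; apply: radical_addv.
- move=> x y /BbP Bx /BbP By; have [pxy rxy] := phiP _ (hBmul _ _ Bx By).
  have [px rx] := phiP _ Bx; have [py ry] := phiP _ By.
  apply: radE; last by apply: supported_addv => //; apply: supported_mulv.
  rewrite (ac2 (mulv x y)); apply: radical_addv => //.
  by case: Bx; case: By => *; apply: rad_mul2 => //; apply: sED.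
- move=> x rx; have [px rpx] := phiP _ (hB0 _ rx).
  by apply: radE => //; rewrite (ac3 x (phi x)); apply: radical_addv.
- move=> z sz; exists z.
    apply/BbP; split; first exact: sED.
    by exists z; split => //; rewrite addvv; apply: radical0.
  have [pz rz] : P z (phi z).
    apply: phiP; split; first exact: sED.
    by exists z; split => //; rewrite addvv; apply: radical0.
  by apply: radE; [rewrite addvC | apply: supported_addv].
Qed.
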